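(* Let $A$ be a metabelian Lie algebra over a field $k$. Then $A$ is a $U$-algebra if and only if every finitely generated subalgebra of $A$ is a $U$-algebra.
   Context: A Lie algebra is metabelian if $(a\circ b)\circ(c\circ d)=0$ identically; $A^2$ is the ideal spanned by all products; $\mathrm{Fit}(A)$ is the ideal generated by all elements lying in nilpotent ideals of $A$. If $\mathrm{Fit}(A)$ is abelian, choose $\{a_\alpha:\alpha\in\Lambda\}\subseteq A$ whose images form a basis of $A/\mathrm{Fit}(A)$ and let $R=k[x_\alpha:\alpha\in\Lambda]$; then $\mathrm{Fit}(A)$ is an $R$-module via $b\cdot x_\alpha=b\circ a_\alpha$, extended multiplicatively and linearly (torsion-freeness does not depend on the choice). $A$ is a (metabelian Lie) $U$-algebra if $\mathrm{Fit}(A)$ is abelian and is a torsion-free $R$-module. *)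

(* Defs.v *)
From HB Require Import structures.
From mathcomp Require Import all_boot all_order all_algebra.
From mathcomp Require Import mpoly.
Set Implicit Arguments. Unset Strict Implicit. Unset Printing Implicit Defensive.
Import GRing.Theory.
Local Open Scope ring_scope.

(* All notions below are relative to a subalgebra S : A -> Prop of A, regarded
   as a Lie algebra in its own right (with S = everything for A itself). *)
Section LieDefs.
Variables (k : fieldType) (A : lmodType k) (br : A -> A -> A).

Definition is_lie_algebra : Prop :=
  [/\ (forall y, linear (br ^~ y)), (forall x, linear (br x)),
      (forall x, br x x = 0) &
      (forall x y z, br x (br y z) + br y (br z x) + br z (br x y) = 0)].

Definition metabelian : Prop :=
  forall a b c d, br (br a b) (br c d) = 0.

Definition subspace (V : A -> Prop) : Prop :=
  [/\ V 0, (forall x y, V x -> V y -> V (x + y)) & (forall c x, V x -> V (c *: x))].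

Definition subalgebra (S : A -> Prop) : Prop :=
  subspace S /\ (forall x y, S x -> S y -> S (br x y)).

Definition gen_subalgebra (s : seq A) : A -> Prop :=
  fun x => forall W, subalgebra W -> (forall y, y \in s -> W y) -> W x.

Definition prod_span (U V : A -> Prop) : A -> Prop :=
  fun x => forall W, subspace W -> (forall u v, U u -> V v -> W (br u v)) -> W x.

Definition ideal (S I : A -> Prop) : Prop :=
  [/\ (forall x, I x -> S x), subspace I &
      (forall x y, I x -> S y -> I (br x y) /\ I (br y x))].

Fixpoint lpow (I : A -> Prop) (n : nat) : A -> Prop :=
  match n with
  | 0 | 1 => I
  | m.+1 => prod_span (lpow I m) I
  end.

Definition nilpotent (I : A -> Prop) : Prop :=
  exists n, forall x, lpow I n x -> x = 0.

Definition Fit (S : A -> Prop) : A -> Prop :=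
  fun x => forall J, ideal S J ->
    (forall y, (exists I, [/\ ideal S I, nilpotent I & I y]) -> J y) -> J x.

Definition Fit_abelian (S : A -> Prop) : Prop :=
  forall x y, Fit S x -> Fit S y -> br x y = 0.

(* T is a set of representatives whose images form a basis of S / Fit(S) *)
Definition basis_mod_Fit (S T : A -> Prop) : Prop :=
  [/\ (forall t, T t -> S t),
      (forall n (a : 'I_n -> A) (c : 'I_n -> k), injective a ->
         (forall i, T (a i)) -> Fit S (\sum_i c i *: a i) -> forall i, c i = 0) &
      (forall x, S x -> exists n (a : 'I_n -> A) (c : 'I_n -> k),
         (forall i, T (a i)) /\ Fit S (x - \sum_i c i *: a i))].

(* action of the monomial x_{a 0}^{m 0} ... x_{a (n-1)}^{m (n-1)} on b *)
Definition mon_act n (a : 'I_n -> A) (m : 'X_{1..n}) (b : A) : A :=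
  foldr (fun i y => iter (m i) (fun z => br z (a i)) y) b (enum 'I_n).

Definition poly_act n (a : 'I_n -> A) (p : {mpoly k[n]}) (b : A) : A :=
  \sum_(m <- msupp p) p@_m *: mon_act a m b.

(* Fit(S) is a torsion-free module over R = k[x_t : t in T]; every nonzero
   element of R is a nonzero polynomial in finitely many distinct variables. *)
Definition torsion_free (S T : A -> Prop) : Prop :=
  forall n (a : 'I_n -> A), injective a -> (forall i, T (a i)) ->
  forall p : {mpoly k[n]}, p != 0 ->
  forall b, Fit S b -> b <> 0 -> poly_act a p b <> 0.

Definition U_algebra (S : A -> Prop) : Prop :=
  Fit_abelian S /\ exists T, basis_mod_Fit S T /\ torsion_free S T.

End LieDefs.

(* Main.v *)
Require Import Defs.
From mathcomp Require Import all_boot all_order all_algebra.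
From mathcomp Require Import mpoly.
From mathcomp Require Import ssrcomplements.
From mathcomp Require classical_sets.
From Stdlib Require Import Classical.
Set Implicit Arguments. Unset Strict Implicit. Unset Printing Implicit Defensive.
Import GRing.Theory.
Local Open Scope ring_scope.

Section Lie.
Variables (k : fieldType) (A : lmodType k) (br : A -> A -> A).
Hypothesis HL : is_lie_algebra br.
Hypothesis HM : metabelian br.

Lemma brDl x y z : br (x + y) z = br x z + br y z.
Proof. case: HL => H _ _ _; by have := H z 1 x y; rewrite /= !scale1r; apply. Qed.
Lemma brDr x y z : br z (x + y) = br z x + br z y.
Proof. case: HL => _ H _ _; by have := H z 1 x y; rewrite /= !scale1r; apply. Qed.
Lemma br0l z : br 0 z = 0.
Proof. by apply: (addrI (br 0 z)); rewrite -brDl !addr0. Qed.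
Lemma br0r z : br z 0 = 0.
Proof. by apply: (addrI (br z 0)); rewrite -brDr !addr0. Qed.
Lemma brZl c x z : br (c *: x) z = c *: br x z.
Proof. case: HL => H _ _ _; by have := H z c x 0; rewrite /= !addr0 br0l addr0; apply. Qed.
Lemma brZr c x z : br z (c *: x) = c *: br z x.
Proof. case: HL => _ H _ _; by have := H z c x 0; rewrite /= !addr0 br0r addr0; apply. Qed.
Lemma brNl x z : br (- x) z = - br x z.
Proof. by rewrite -scaleN1r brZl scaleN1r. Qed.
Lemma brNr x z : br z (- x) = - br z x.
Proof. by rewrite -scaleN1r brZr scaleN1r. Qed.
Lemma brBl x y z : br (x - y) z = br x z - br y z.
Proof. by rewrite brDl brNl. Qed.
Lemma brBr x y z : br z (x - y) = br z x - br z y.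
Proof. by rewrite brDr brNr. Qed.
Lemma br_anti x y : br x y = - br y x.
Proof.
case: HL => _ _ H _; have := H (x + y); rewrite brDl !brDr !H add0r addr0.
by move/eqP; rewrite addr_eq0 => /eqP.
Qed.
Lemma br_suml (I : Type) (r : seq I) (P : pred I) (F : I -> A) z :
  br (\sum_(i <- r | P i) F i) z = \sum_(i <- r | P i) br (F i) z.
Proof. by apply: (big_morph (br^~ z)); [move=> ??; apply: brDl| apply: br0l]. Qed.
Lemma br_sumr (I : Type) (r : seq I) (P : pred I) (F : I -> A) z :
  br z (\sum_(i <- r | P i) F i) = \sum_(i <- r | P i) br z (F i).
Proof. by apply: (big_morph (br z)); [move=> ??; apply: brDr| apply: br0r]. Qed.

Lemma br_comm3 y u v : br y (br u v) = 0 -> br (br y u) v = br (br y v) u.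
Proof.
move=> h; case: HL => _ _ _ J; have := J y u v; rewrite h add0r.
rewrite [br u (br v y)]br_anti [br v y]br_anti brNl opprK.
rewrite [br v (br y u)]br_anti => /eqP; rewrite subr_eq0 => /eqP; by [].
Qed.

Lemma sub0 (V : A -> Prop) : subspace V -> V 0. Proof. by case. Qed.
Lemma subD (V : A -> Prop) x y : subspace V -> V x -> V y -> V (x + y). Proof. by case=> _ H _; apply: H. Qed.
Lemma subZ (V : A -> Prop) c x : subspace V -> V x -> V (c *: x). Proof. by case=> _ _ H; apply: H. Qed.
Lemma subN (V : A -> Prop) x : subspace V -> V x -> V (- x). Proof. by move=> H /(subZ (-1) H); rewrite scaleN1r. Qed.
Lemma subB (V : A -> Prop) x y : subspace V -> V x -> V y -> V (x - y).
Proof. by move=> H hx hy; apply: subD => //; apply: subN. Qed.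
Lemma sub_sum (V : A -> Prop) (I : Type) (r : seq I) (P : pred I) (F : I -> A) :
  subspace V -> (forall i, P i -> V (F i)) -> V (\sum_(i <- r | P i) F i).
Proof. move=> H h; apply: big_ind => //; [exact: sub0 | move=> x y; exact: subD]. Qed.
Lemma subBr (V : A -> Prop) x y : subspace V -> V (x - y) -> V y -> V x.
Proof. by move=> H h1 h2; have := subD H h1 h2; rewrite subrK. Qed.

Lemma subspace_prod U V : subspace (prod_span br U V).
Proof.
split; first by move=> W [].
- by move=> x y hx hy W HW h; apply: subD => //; [apply: hx | apply: hy].
- by move=> c x hx W HW h; apply: subZ => //; apply: hx.
Qed.
Lemma prod_in U V u v : U u -> V v -> prod_span br U V (br u v).
Proof. by move=> hu hv W _ h; apply: h. Qed.
Lemma prod_mono (U U' V V' : A -> Prop) :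
  (forall x, U x -> U' x) -> (forall x, V x -> V' x) ->
  forall x, prod_span br U V x -> prod_span br U' V' x.
Proof. move=> hU hV x hx W HW h; apply: hx => // u v /hU hu /hV hv; exact: h. Qed.

Lemma lpow_mono (I J : A -> Prop) : (forall x, I x -> J x) -> forall n x, lpow br I n x -> lpow br J n x.
Proof.
move=> hIJ; elim=> [|[|n] IH] //= x; apply: prod_mono => //; exact: IH.
Qed.

Lemma subspace0 : subspace (fun x : A => x = 0).
Proof. by split => // [x y -> ->|c x ->]; rewrite ?addr0 ?scaler0. Qed.

Lemma gen_sub s : subalgebra br (gen_subalgebra br s).
Proof.
split; first split.
- by move=> W [[]].
- by move=> x y hx hy W HW h; case: (HW)=> HW0 _; apply: subD => //; [apply: hx | apply: hy].
- by move=> c x hx W HW h; case: (HW)=> HW0 _; apply: subZ => //; apply: hx.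
- by move=> x y hx hy W HW h; case: (HW) => _ HB; apply: HB; [apply: hx|apply: hy].
Qed.
Lemma gen_in s x : x \in s -> gen_subalgebra br s x.
Proof. by move=> hx W _ h; apply: h. Qed.
Lemma gen_mono s s' : {subset s <= s'} -> forall x, gen_subalgebra br s x -> gen_subalgebra br s' x.
Proof. move=> hs x hx; apply: hx; first exact: gen_sub. by move=> y /hs; apply: gen_in. Qed.
Lemma subalgT : subalgebra br (fun _ => True).
Proof. by []. Qed.


Section FitS.
Variable S : A -> Prop.
Hypothesis HS : subalgebra br S.

Lemma ideal_self : ideal br S S.
Proof. case: HS => H1 H2; split => // x y hx hy; split; exact: H2. Qed.

Lemma Fit_ideal : ideal br S (Fit br S).
Proof.
split.
- move=> x hx; apply: hx; first exact: ideal_self.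
  by move=> y [I [[HI _ _] _ Iy]]; apply: HI.
- split; first by move=> J [_ [] ].
  + move=> x y hx hy J HJ h; case: (HJ) => _ HJ1 _; apply: subD => //; [exact: hx|exact: hy].
  + move=> c x hx J HJ h; case: (HJ) => _ HJ1 _; apply: subZ => //; exact: hx.
- move=> x y hx hy; split => J HJ h; case: (HJ) => _ _ HJ2; have := HJ2 x y (hx J HJ h) hy; case=> //.
Qed.

Lemma Fit_S x : Fit br S x -> S x.
Proof. by case: Fit_ideal => H _ _; apply: H. Qed.
Lemma Fit_subspace : subspace (Fit br S).
Proof. by case: Fit_ideal. Qed.
Lemma Fit_brl x y : Fit br S x -> S y -> Fit br S (br x y).
Proof. by case: Fit_ideal => _ _ H hx hy; case: (H x y hx hy). Qed.
Lemma Fit_brr x y : Fit br S x -> S y -> Fit br S (br y x).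
Proof. by case: Fit_ideal => _ _ H hx hy; case: (H x y hx hy). Qed.

Lemma Fit_nil (I : A -> Prop) y : ideal br S I -> nilpotent br I -> I y -> Fit br S y.
Proof. move=> HI NI Iy J HJ h; apply: (h y); by exists I. Qed.

Lemma Fit_min (J : A -> Prop) : ideal br S J ->
  (forall I, ideal br S I -> nilpotent br I -> forall y, I y -> J y) ->
  forall x, Fit br S x -> J x.
Proof. move=> HJ h x hx; apply: hx => // y [I [HI NI Iy]]; exact: h NI _ Iy. Qed.

End FitS.

Lemma abel_nil (I : A -> Prop) : (forall x y, I x -> I y -> br x y = 0) -> nilpotent br I.
Proof.
move=> h; exists 2 => x /= hx; apply: (hx (fun x => x = 0)); first exact: subspace0.
by move=> u v; apply: h.
Qed.

Lemma sq_br0 U V U' V' x y : prod_span br U V x -> prod_span br U' V' y -> br x y = 0.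
Proof.
move=> hx; apply: (hx (fun x => forall y, prod_span br U' V' y -> br x y = 0)).
- split; first by move=> *; rewrite br0l.
  + by move=> a b ha hb y' hy; rewrite brDl ha ?hb ?addr0.
  + by move=> c a ha y' hy; rewrite brZl ha ?scaler0.
- move=> u v hu hv y0 hy; apply: (hy (fun y => br (br u v) y = 0)).
  + split; first by rewrite br0r.
    * by move=> a b ha hb; rewrite brDr ha hb addr0.
    * by move=> c a ha; rewrite brZr ha scaler0.
  + by move=> *; apply: HM.
Qed.

Section SqS.
Variable S : A -> Prop.
Hypothesis HS : subalgebra br S.

Lemma Sq_ideal : ideal br S (prod_span br S S).
Proof.
have SS : forall x, prod_span br S S x -> S x.
  by case: (HS) => H1 H2 x hx; apply: (hx S).
split => //; first exact: subspace_prod.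
by move=> x y hx hy; split; apply: prod_in => //; apply: SS.
Qed.

Lemma Sq_nil : nilpotent br (prod_span br S S).
Proof. apply: abel_nil => x y; exact: sq_br0. Qed.

Lemma Fit_br u v : S u -> S v -> Fit br S (br u v).
Proof. by move=> hu hv; apply: (Fit_nil Sq_ideal Sq_nil); apply: prod_in. Qed.

End SqS.

Lemma lpow_zeroS (I : A -> Prop) n : (forall x, lpow br I n x -> x = 0) ->
  forall x, lpow br I n.+1 x -> x = 0.
Proof.
case: n => [|n] h x //=; first exact: h.
move=> hx; apply: (hx (fun x => x = 0)); first exact: subspace0.
by move=> u v /h -> _; rewrite br0l.
Qed.

Lemma lpow_iter S (I : A -> Prop) y z : ideal br S I -> I y -> S z ->
  forall m, lpow br I m.+1 (iter m (fun w => br w y) (br z y)).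
Proof.
move=> [HIS HIs HIb] Iy Sz; elim=> [|m IH] /=; first by case: (HIb y z Iy Sz).
by apply: prod_in.
Qed.

Lemma nil_iter S (I : A -> Prop) y z : ideal br S I -> nilpotent br I -> I y -> S z ->
  exists m, iter m (fun w => br w y) (br z y) = 0.
Proof.
move=> HI [n Hn] Iy Sz; exists n; apply: (lpow_zeroS Hn); exact: lpow_iter HI Iy Sz n.
Qed.

End Lie.

Section Act.
Variables (k : fieldType) (A : lmodType k) (br : A -> A -> A).
Hypothesis HL : is_lie_algebra br.
Hypothesis HM : metabelian br.
Variable S : A -> Prop.
Hypothesis HS : subalgebra br S.
Hypothesis HFa : Fit_abelian br S.
Variables (n : nat) (a : 'I_n -> A).
Hypothesis Ha : forall i, S (a i).

Local Notation F := (Fit br S).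
Local Notation f j := (fun z => br z (a j)).

Lemma f_in j z : F z -> F (f j z).
Proof. move=> h; exact: Fit_brl. Qed.

Lemma f_comm j l z : F z -> f j (f l z) = f l (f j z).
Proof.
move=> h; apply: br_comm3 => //; apply: HFa => //; exact: Fit_br.
Qed.

Lemma iter_in j e z : F z -> F (iter e (f j) z).
Proof. by move=> h; elim: e => //= e IH; apply: f_in. Qed.

Lemma iter_comm j l e z : F z -> iter e (f j) (f l z) = f l (iter e (f j) z).
Proof.
move=> h; elim: e => //= e ->; apply: f_comm; exact: iter_in.
Qed.

Definition G (m : 'X_{1..n}) := fun (i : 'I_n) y => iter (m i) (f i) y.

Lemma foldr_in m s z : F z -> F (foldr (G m) z s).
Proof. by move=> h; elim: s => //= j s IH; apply: iter_in. Qed.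

Lemma foldr_comm m s l z : F z -> foldr (G m) (f l z) s = f l (foldr (G m) z s).
Proof.
move=> h; elim: s => //= j s ->; rewrite /G iter_comm //; exact: foldr_in.
Qed.

Lemma foldr_U m i s z : uniq s -> F z ->
  foldr (G (U_(i) + m)%MM) z s = if i \in s then f i (foldr (G m) z s) else foldr (G m) z s.
Proof.
move=> + h; elim: s => //= j s IH /andP[js us]; rewrite in_cons IH //.
rewrite /G mnmDE mnm1E; have [eij|nij] := eqVneq i j.
  by subst j; rewrite /= (negbTE js).
rewrite /= add0n; case: (i \in s) => //; rewrite iter_comm //; exact: foldr_in.
Qed.

Lemma mon_actE m z : mon_act br a m z = foldr (G m) z (enum 'I_n).
Proof. by []. Qed.

Lemma mon_act_in m z : F z -> F (mon_act br a m z).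
Proof. by move=> h; rewrite mon_actE; apply: foldr_in. Qed.

Lemma mon_actU i m z : F z -> mon_act br a (U_(i) + m)%MM z = f i (mon_act br a m z).
Proof. by move=> h; rewrite !mon_actE foldr_U ?enum_uniq ?mem_enum. Qed.

Lemma mon_act0 z : mon_act br a 0%MM z = z.
Proof. rewrite mon_actE; elim: (enum 'I_n) => //= j s ->; by rewrite /G mnm0E. Qed.

Lemma poly_actw (K : nat) (p : {mpoly k[n]}) (b : A) : (msize p <= K)%N ->
  poly_act br a p b = \sum_(m : 'X_{1..n < K}) p@_m *: mon_act br a m b.
Proof.
move=> lt_pk; pose I : subFinType _ := 'X_{1..n < K}.
rewrite /poly_act (big_mksub I) //=; first last.
  by move=> x /msize_mdeg_lt /leq_trans; apply.
  by rewrite msupp_uniq.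
by rewrite big_rmcond //= => i; move/memN_msupp_eq0 ->; rewrite scale0r.
Qed.

Lemma poly_act_lin c p q b :
  poly_act br a (c *: p + q) b = c *: poly_act br a p b + poly_act br a q b.
Proof.
pose K := maxn (msize (c *: p + q)) (maxn (msize p) (msize q)).
have h1 : (msize (c *: p + q) <= K)%N by rewrite leq_maxl.
have h2 : (msize p <= K)%N by rewrite /K (leq_trans (leq_maxl _ _) (leq_maxr _ _)).
have h3 : (msize q <= K)%N by rewrite /K (leq_trans (leq_maxr _ _) (leq_maxr _ _)).
rewrite (poly_actw _ h1) (poly_actw _ h2) (poly_actw _ h3).
rewrite scaler_sumr -big_split /=; apply: eq_bigr => m _.
by rewrite mcoeffD mcoeffZ scalerDl scalerA.
Qed.

Lemma poly_act0 b : poly_act br a 0 b = 0.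
Proof. by rewrite /poly_act msupp0 big_nil. Qed.

Lemma poly_actD p q b : poly_act br a (p + q) b = poly_act br a p b + poly_act br a q b.
Proof. by have := poly_act_lin 1 p q b; rewrite !scale1r. Qed.

Lemma poly_actZ c p b : poly_act br a (c *: p) b = c *: poly_act br a p b.
Proof. by rewrite -[c *: p]addr0 poly_act_lin poly_act0 addr0. Qed.

Lemma poly_act_sum (I : Type) (r : seq I) (P : pred I) (Fp : I -> {mpoly k[n]}) b :
  poly_act br a (\sum_(i <- r | P i) Fp i) b = \sum_(i <- r | P i) poly_act br a (Fp i) b.
Proof.
apply: (big_morph (fun p => poly_act br a p b)); [move=> p q; exact: poly_actD | exact: poly_act0].
Qed.

Lemma poly_actX m b : poly_act br a 'X_[m] b = mon_act br a m b.
Proof. by rewrite /poly_act msuppX big_seq1 mcoeffX eqxx scale1r. Qed.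

Lemma poly_act1 b : poly_act br a 1 b = b.
Proof. by rewrite -mpolyX0 poly_actX mon_act0. Qed.

Lemma poly_act_in p b : F b -> F (poly_act br a p b).
Proof.
move=> h; apply: (sub_sum _ (Fit_subspace HS)) => m _.
apply: (subZ _ (Fit_subspace HS)). exact: mon_act_in.
Qed.

Lemma poly_actXi i p b : F b -> poly_act br a ('X_i * p) b = f i (poly_act br a p b).
Proof.
move=> h; elim/mpolyind: p => [|c m p _ _ IH]; first by rewrite mulr0 poly_act0 (br0l HL).
rewrite mulrDr poly_actD IH -scalerAr poly_actZ -mpolyXD poly_actX mon_actU //.
by rewrite poly_actD poly_actZ poly_actX (brDl HL) (brZl HL).
Qed.

End Act.

Section PolyInd.
Variables (R : comRingType) (n : nat).

Lemma mpoly_indX (P : {mpoly R[n]} -> Prop) :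
  P 1 -> (forall c p q, P p -> P q -> P (c *: p + q)) ->
  (forall i p, P p -> P ('X_i * p)) -> forall p, P p.
Proof.
move=> P1 Plin PX.
have P0 : P 0 by have := Plin (-1) 1 1 P1 P1; rewrite scaleN1r addNr.
have PXe i e q : P q -> P ('X_i ^+ e * q).
  by move=> Pq; elim: e => [|e IH]; rewrite ?expr0 ?mul1r // exprS -mulrA; apply: PX.
have Pprod s (e : 'I_n -> nat) : P (\prod_(i <- s) 'X_i ^+ e i).
  by elim: s => [|i s IH]; rewrite ?big_nil ?big_cons //; apply: PXe.
elim/mpolyind => // c m p _ _ Pp; apply: Plin => //.
rewrite mpolyXE_id; exact: Pprod.
Qed.
End PolyInd.

Section Comp.
Variables (K : fieldType) (n m : nat) (C : 'M[K]_(n, m)) (D : 'M[K]_(m, n)).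
Hypothesis CD : C *m D = 1%:M.

Definition Lt : n.-tuple {mpoly K[m]} := [tuple \sum_(j < m) C i j *: 'X_j | i < n].
Definition Mt : m.-tuple {mpoly K[n]} := [tuple \sum_(i < n) D j i *: 'X_i | j < m].

Lemma LM i : (tnth Lt i) \mPo Mt = 'X_i.
Proof.
rewrite tnth_mktuple raddf_sum /=.
under eq_bigr => j _ do rewrite comp_mpolyZ comp_mpolyXU -tnth_nth tnth_mktuple scaler_sumr.
rewrite exchange_big /= (bigD1 i) //=.
have e1 : \sum_(j < m) C i j *: (D j i *: 'X_i) = 'X_i :> {mpoly K[n]}.
  under eq_bigr => j _ do rewrite scalerA.
  rewrite -scaler_suml; have := congr1 (fun M : 'M[K]_n => M i i) CD; rewrite !mxE eqxx /= => ->.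
  by rewrite scale1r.
rewrite e1 big1 ?addr0 // => l nli.
under eq_bigr => j _ do rewrite scalerA.
rewrite -scaler_suml; have := congr1 (fun M : 'M[K]_n => M i l) CD.
by rewrite !mxE eq_sym (negbTE nli) /= => ->; rewrite scale0r.
Qed.

Lemma comp_inv p : (p \mPo Lt) \mPo Mt = p.
Proof.
elim/mpoly_indX: p.
- by rewrite !comp_mpoly1.
- by move=> c p q IHp IHq; rewrite !comp_mpolyD !comp_mpolyZ IHp IHq.
- move=> i p IH; rewrite !rmorphM /= IH comp_mpolyXU -tnth_nth LM //.
Qed.

Lemma comp_neq0 p : p != 0 -> p \mPo Lt != 0.
Proof. by apply: contraNN => /eqP h; rewrite -(comp_inv p) h comp_mpoly0. Qed.
End Comp.

Section Subst.
Variables (k : fieldType) (A : lmodType k) (br : A -> A -> A).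
Hypothesis HL : is_lie_algebra br.
Hypothesis HM : metabelian br.
Variable S : A -> Prop.
Hypothesis HS : subalgebra br S.
Hypothesis HFa : Fit_abelian br S.
Variables (n m : nat) (a : 'I_n -> A) (t : 'I_m -> A) (C : 'M[k]_(n, m)).
Hypothesis Ha : forall i, S (a i).
Hypothesis Ht : forall j, S (t j).
Hypothesis HC : forall i, Fit br S (a i - \sum_j C i j *: t j).

Lemma act_subst p b : Fit br S b -> poly_act br t (p \mPo Lt C) b = poly_act br a p b.
Proof.
elim/mpoly_indX: p b.
- by move=> b hb; rewrite comp_mpoly1 !poly_act1.
- move=> c p q IHp IHq b hb.
  by rewrite comp_mpolyD comp_mpolyZ !poly_act_lin IHp ?IHq.
- move=> i p IH b hb; rewrite rmorphM /= comp_mpolyXU -tnth_nth tnth_mktuple.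
  rewrite (poly_actXi HL HM HS HFa Ha) // -IH //.
  set r := p \mPo Lt C; set w := poly_act br t r b.
  have hw : Fit br S w by exact: (poly_act_in HS Ht r hb).
  rewrite mulr_suml poly_act_sum.
  under eq_bigr => j _ do rewrite -scalerAl poly_actZ (poly_actXi HL HM HS HFa Ht) //.
  have : br w (a i - \sum_j C i j *: t j) = 0 by apply: HFa.
  rewrite (brBr HL) (br_sumr HL) => /eqP; rewrite subr_eq0 => /eqP ->.
  by apply: eq_bigr => j _; rewrite (brZr HL).
Qed.

End Subst.

Section Regroup.
Variables (k : fieldType) (A : lmodType k).

Lemma regroup (l : seq A) N (u : 'I_N -> A) (c : 'I_N -> k) :
  uniq l -> (forall kk, u kk \in l) ->
  \sum_kk c kk *: u kk =
  \sum_(j < size l) (\sum_(kk | u kk == nth 0 l j) c kk) *: nth 0 l j.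
Proof.
move=> ul ul2.
under [RHS]eq_bigr => j _ do rewrite scaler_suml big_mkcond /=.
rewrite exchange_big /=; apply: eq_bigr => kk _.
have lt : (index (u kk) l < size l)%N by rewrite index_mem.
rewrite (bigD1 (Ordinal lt)) //= nth_index // eqxx big1 ?addr0 // => j nj.
case: ifP => // /eqP e; move: nj; rewrite -val_eqE /= e index_uniq //.
by rewrite eqxx.
Qed.
End Regroup.

Section GLemma.
Variables (k : fieldType) (A : lmodType k) (br : A -> A -> A).
Hypothesis HL : is_lie_algebra br.
Hypothesis HM : metabelian br.

Definition indep_mod (F : A -> Prop) n (a : 'I_n -> A) :=
  forall c : 'I_n -> k, F (\sum_i c i *: a i) -> forall i, c i = 0.

Lemma Gmain (S T : A -> Prop) : subalgebra br S -> Fit_abelian br S ->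
  basis_mod_Fit br S T -> torsion_free br S T ->
  forall n (a : 'I_n -> A), (forall i, S (a i)) -> indep_mod (Fit br S) a ->
  forall p : {mpoly k[n]}, p != 0 -> forall b, Fit br S b -> b <> 0 ->
  poly_act br a p b <> 0.
Proof.
move=> HS HFa [HTS _ HTsp] HT n a Ha Hind p p0 b Fb b0.
have /fin_all_exists [fam Hfam] : forall i : 'I_n, exists fm :
    {nn : nat & (('I_nn -> A) * ('I_nn -> k))%type},
    (forall j, T ((projT2 fm).1 j)) /\
    Fit br S (a i - \sum_j (projT2 fm).2 j *: (projT2 fm).1 j).
  move=> i; have [nn [u [c [h1 h2]]]] := HTsp _ (Ha i).
  by exists (existT _ nn (u, c)).
pose l := undup (flatten [seq [seq (projT2 (fam i)).1 j | j <- enum 'I_(projT1 (fam i))]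
                         | i <- enum 'I_n]).
have ul : uniq l by apply: undup_uniq.
have inl i j : (projT2 (fam i)).1 j \in l.
  rewrite mem_undup; apply/flattenP.
  exists [seq (projT2 (fam i)).1 j | j <- enum 'I_(projT1 (fam i))].
    by apply: map_f; rewrite mem_enum.
  by apply: map_f; rewrite mem_enum.
have Tl x : x \in l -> T x.
  rewrite mem_undup => /flattenP [s /mapP [i _ ->] /mapP [j _ ->]].
  by case: (Hfam i) => h _; apply: h.
pose m := size l.
pose t (j : 'I_m) := nth 0 l j.
have tinj : injective t.
  by move=> j1 j2 /eqP; rewrite /t nth_uniq // => /eqP /val_inj.
have Tt j : T (t j) by apply: Tl; apply: mem_nth.
have St j : S (t j) by apply: HTS.
pose C : 'M[k]_(n, m) := \matrix_(i, j)
  \sum_(kk | (projT2 (fam i)).1 kk == nth 0 l j) (projT2 (fam i)).2 kk.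
have HC i : Fit br S (a i - \sum_j C i j *: t j).
  case: (Hfam i) => _; rewrite (regroup _ ul) //.
  suff -> : \sum_j C i j *: t j = \sum_(j < size l)
     (\sum_(kk | (projT2 (fam i)).1 kk == nth 0 l j) (projT2 (fam i)).2 kk) *: nth 0 l j by [].
  by apply: eq_bigr => j _; rewrite mxE.
have rfC : row_free C.
  apply: inj_row_free => v hv; apply/rowP => i0.
  have hv' j : \sum_i v 0 i * C i j = 0.
    by have := congr1 (fun M : 'rV[k]_m => M 0 j) hv; rewrite !mxE.
  rewrite mxE; apply: (Hind (fun i => v 0 i)).
  have -> : \sum_i v 0 i *: a i =
      \sum_i v 0 i *: (a i - \sum_j C i j *: t j) + \sum_j (\sum_i v 0 i * C i j) *: t j.
    have -> : \sum_j (\sum_i v 0 i * C i j) *: t j = \sum_i v 0 i *: \sum_j C i j *: t j.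
      under eq_bigr => j _ do rewrite scaler_suml.
      rewrite exchange_big /=; apply: eq_bigr => i _; rewrite scaler_sumr.
      by apply: eq_bigr => j _; rewrite scalerA.
    by rewrite -big_split /=; apply: eq_bigr => i _; rewrite -scalerDr subrK.
  under [X in _ (_ + X)]eq_bigr => j _ do rewrite hv' scale0r.
  rewrite big1_eq addr0; apply: (sub_sum _ (Fit_subspace HS)) => i _.
  by apply: (subZ _ (Fit_subspace HS)).
have [D CD] := row_freeP rfC.
have q0 := comp_neq0 CD p0.
rewrite -(act_subst HL HM HS HFa Ha St HC) //.
exact: HT.
Qed.

End GLemma.

Section Basis.
Variables (k : fieldType) (A : lmodType k).

Definition indepX (F X : A -> Prop) := forall n (a : 'I_n -> A) (c : 'I_n -> k),
  injective a -> (forall i, X (a i)) -> F (\sum_i c i *: a i) -> forall i, c i = 0.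

Definition spans (F X : A -> Prop) x := exists n (a : 'I_n -> A) (c : 'I_n -> k),
  (forall i, X (a i)) /\ F (x - \sum_i c i *: a i).

Lemma chain_fin (Fam : (A -> Prop) -> Prop) :
  (forall X Y, Fam X -> Fam Y -> (forall z, X z -> Y z) \/ (forall z, Y z -> X z)) ->
  forall s : seq A, s <> [::] -> (forall x, x \in s -> exists X, Fam X /\ X x) ->
  exists X, Fam X /\ forall x, x \in s -> X x.
Proof.
move=> tot; elim=> // x s IH _ hs.
have [X [FX Xx]] := hs x (mem_head _ _).
case: s IH hs => [|y s] IH hs.
  by exists X; split => // z; rewrite inE => /eqP ->.
have [Y [FY HY]] : exists Y, Fam Y /\ forall z, z \in y :: s -> Y z.
  by apply: IH => // z zs; apply: hs; rewrite inE zs orbT.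
case: (tot _ _ FX FY) => h.
  exists Y; split => // z; rewrite inE => /orP [/eqP ->|]; [exact: h| exact: HY].
exists X; split => // z; rewrite inE => /orP [/eqP -> //|/HY]; exact: h.
Qed.

Lemma exists_basis (S F : A -> Prop) : subspace F ->
  exists T, [/\ (forall t, T t -> S t), indepX F T & forall x, S x -> spans F T x].
Proof.
move=> HF.
pose P := fun X : A -> Prop => (forall t, X t -> S t) /\ indepX F X.
have [] := @classical_sets.Zorn_bigcup A P.
  move=> Fam sFP tot; split.
    by move=> t [X /sFP [h _] Xt]; apply: h.
  move=> n a c ia ha hF i.
  have [X [FX HX]] : exists X, Fam X /\ forall x, x \in [seq a i | i <- enum 'I_n] -> X x.
    apply: chain_fin.
    - move=> X Y FX FY; case: (tot X Y FX FY) => h; [left|right] => z; exact: h.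
    - by case: (enum 'I_n) (mem_enum 'I_n i) => //.
    - move=> x /mapP [j _ ->]; case: (ha j) => X FX Xa; by exists X.
  have [_ iX] := sFP X FX; apply: (iX n a c ia) => //.
  by move=> j; apply: HX; apply: map_f; rewrite mem_enum.
move=> T [PT maxT]; have [TS iT] := PT; exists T; split => // x Sx.
apply: NNPP => nsp.
have nTx : ~ T x.
  move=> Tx; apply: nsp; exists 1, (fun _ => x), (fun _ => 1); split => //.
  by rewrite big_ord1 scale1r subrr; apply: sub0.
apply: (maxT (fun y => T y \/ y = x)).
  split; first by move=> z Tz; left.
  by move=> h; apply: nTx; apply: (h x); right.
split; first by move=> t [/TS|->].
move=> n a c ia ha hF.
case: (classic (exists i0, a i0 = x)) => [[i0 ai0]|nx]; last first.
  apply: (iT n a c ia) => // i; case: (ha i) => // e; case: nx; by exists i.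
have Tl j : T (a (lift i0 j)).
  case: (ha (lift i0 j)) => // e; rewrite -ai0 in e.
  by move/ia: e => /eqP; rewrite eq_sym (negbTE (neq_lift _ _)).
move: hF; rewrite (bigD1_ord i0) //= ai0 => hF.
have c0 : c i0 = 0.
  apply: NNPP => cn0; apply: nsp.
  exists n.-1, (fun j => a (lift i0 j)), (fun j => - (c i0)^-1 * c (lift i0 j)); split => //.
  have -> : x - \sum_j (- (c i0)^-1 * c (lift i0 j)) *: a (lift i0 j) =
     (c i0)^-1 *: (c i0 *: x + \sum_(i < n.-1) c (lift i0 i) *: a (lift i0 i)).
    have cn : c i0 != 0 by apply/eqP.
    rewrite scalerDr scalerA (mulVf cn) scale1r scaler_sumr -sumrN.
    congr (x + _); apply: eq_bigr => j _.
    by rewrite scalerA mulNr scaleNr opprK.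
  exact: subZ.
have cl : forall j, c (lift i0 j) = 0.
  apply: (iT _ (fun j => a (lift i0 j))) => //.
    by move=> j1 j2 /ia /lift_inj.
  by move: hF; rewrite c0 scale0r add0r.
move=> i; case: (unliftP i0 i) => [j ->|->] //.
Qed.

End Basis.

Section Main.
Variables (k : fieldType) (A : lmodType k) (br : A -> A -> A).
Hypothesis HL : is_lie_algebra br.
Hypothesis HM : metabelian br.

Lemma X_neq0 n (i : 'I_n) : ('X_i : {mpoly k[n]}) != 0.
Proof.
apply/eqP => h; have := @mcoeffX n k U_(i) U_(i).
by rewrite h mcoeff0 eqxx => /eqP; rewrite eq_sym oner_eq0.
Qed.

Lemma poly_act_X1 n (a : 'I_n -> A) (S : A -> Prop) i w :
  subalgebra br S -> Fit_abelian br S -> (forall i, S (a i)) -> Fit br S w ->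
  poly_act br a 'X_i w = br w (a i).
Proof.
move=> HS HFa Ha hw; rewrite -[X in poly_act _ _ X]mulr1.
by rewrite (poly_actXi HL HM HS HFa Ha) // poly_act1.
Qed.

Lemma mon_act_0 n (a : 'I_n -> A) b : mon_act br a 0%MM b = b.
Proof. rewrite /mon_act; elim: (enum 'I_n) => //= j s ->; by rewrite mnm0E. Qed.

Lemma U_abelian S : subalgebra br S -> (forall x y, S x -> S y -> br x y = 0) ->
  U_algebra br S.
Proof.
move=> HS hab.
have FS x : Fit br S x <-> S x.
  split; first exact: Fit_S.
  by move=> Sx; apply: (Fit_nil (ideal_self HS) (abel_nil hab)).
split.
  by move=> x y /FS hx /FS hy; apply: hab.
exists (fun _ => False); split.
  split.
  - by [].
  - by move=> n a c _ hT _ i; case: (hT i).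
  move=> x Sx; exists 0%N, (fun _ => 0), (fun _ => 0); split; first by case.
  by rewrite big_ord0 subr0; apply/FS.
move=> [|n] a _ hT p p0 b _ b0; last by case: (hT ord0).
have ms : msupp p = [:: 0%MM].
  have hm (m : 'X_{1..0}) : m = 0%MM by apply/mnmP; case.
  case e : (msupp p) => [|m s].
    by move: p0; rewrite -msupp_eq0 e.
  have us := msupp_uniq p; rewrite e in us.
  case: s e us => [|m' s] e us; first by rewrite (hm m).
  by move: us; rewrite /= (hm m) (hm m') inE eqxx.
have c0 : p@_0%MM != 0 by rewrite -mcoeff_msupp ms mem_head.
rewrite /poly_act ms big_seq1 mon_act_0 => /eqP.
by rewrite scaler_eq0 (negbTE c0) /= => /eqP.
Qed.


Local Notation FA := (Fit br (fun _ => True)).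

Lemma ideal_meet (S I : A -> Prop) : subalgebra br S -> ideal br (fun _ => True) I ->
  ideal br S (fun y => S y /\ I y).
Proof.
move=> HS [_ HIs HIb]; case: (HS) => HSs HSb; split.
- by move=> x [].
- split; first by split; [apply: sub0|apply: sub0].
  + by move=> x y [Sx Ix] [Sy Iy]; split; apply: subD.
  + by move=> c x [Sx Ix]; split; apply: subZ.
- move=> x y [Sx Ix] Sy; have [h1 h2] := HIb x y Ix Logic.I; split; split => //; exact: HSb.
Qed.

(* y outside Fit S acts injectively: from G with one variable *)
Lemma act_inj (S T : A -> Prop) : subalgebra br S -> Fit_abelian br S ->
  basis_mod_Fit br S T -> torsion_free br S T ->
  forall y, S y -> ~ Fit br S y -> forall w, Fit br S w -> w <> 0 -> br w y <> 0.
Proof.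
move=> HS HFa HB HT y Sy nFy w Fw w0.
have Ha : forall i : 'I_1, S ((fun _ => y) i) by [].
rewrite -(poly_act_X1 ord0 HS HFa Ha Fw).
apply: (Gmain HL HM HS HFa HB HT Ha _ (X_neq0 _) Fw w0).
move=> c; rewrite big_ord1 => hc i; rewrite (ord1 i).
apply: NNPP => c0; apply: nFy.
have := subZ ((c ord0)^-1) (Fit_subspace HS) hc.
by rewrite scalerA mulVf ?scale1r //; apply/eqP.
Qed.

Lemma dir1 : U_algebra br (fun _ => True) -> forall s, U_algebra br (gen_subalgebra br s).
Proof.
move=> [HFa [T [HB HT]]] s.
set B := gen_subalgebra br s; have HSB : subalgebra br B := gen_sub br s.
case: (classic (forall x y, B x -> B y -> br x y = 0)) => [hab|].
  exact: U_abelian.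
move=> /not_all_ex_not [u /not_all_ex_not [v]].
move=> nuv; have [Bu [Bv z0]] : B u /\ B v /\ br u v <> 0.
  by apply: NNPP => h; apply: nuv => Bu Bv; apply: NNPP => z0; apply: h.
set z := br u v.
have Bz : B z by case: HSB => _ H; apply: H.
have FAz : FA z by apply: (Fit_br HL HM (subalgT br)).
have HIm := ideal_meet HSB (Fit_ideal (subalgT br)).
have FB1 : forall y, Fit br B y -> B y /\ FA y.
  apply: (Fit_min HIm) => I HI NI y' Iy'.
  have By' : B y' by case: HI => H _ _; apply: H.
  split => //; apply: NNPP => nF.
  have inj w : FA w -> w <> 0 -> br w y' <> 0 /\ FA (br w y').
    move=> Fw w0; split; first exact: (act_inj (subalgT br) HFa HB HT Logic.I nF).
    exact: (Fit_brl (subalgT br)).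
  have it m : iter m (fun w => br w y') (br z y') <> 0 /\ FA (iter m (fun w => br w y') (br z y')).
    elim: m => [|m [IH1 IH2]] /=; first by apply: inj => //.
    exact: inj.
  have [m hm] := nil_iter HL HI NI Iy' Bz.
  by case: (it m).
have FB2 y : B y -> FA y -> Fit br B y.
  move=> By Fy; apply: (Fit_nil HIm) => //.
  by apply: abel_nil => x1 x2 [_ h1] [_ h2]; apply: HFa.
split.
  by move=> x y /FB1 [_ hx] /FB1 [_ hy]; apply: HFa.
have [TB [TBS iTB spTB]] := exists_basis B (Fit_subspace HSB).
exists TB; split; first by split.
move=> n a ia hTa p p0 b Fb b0.
have Ba i : B (a i) by apply: TBS.
apply: (Gmain HL HM (subalgT br) HFa HB HT (fun _ => Logic.I)) => //.
- move=> c hc; apply: (iTB n a c ia hTa); apply: FB2 => //.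
  apply: (sub_sum _ (proj1 HSB)) => i _; apply: (subZ _ (proj1 HSB)); exact: Ba.
- by case: (FB1 _ Fb).
Qed.


Lemma dir2 : (forall s, U_algebra br (gen_subalgebra br s)) -> U_algebra br (fun _ => True).
Proof.
move=> H.
case: (classic (forall x y : A, br x y = 0)) => [hab|].
  by apply: U_abelian => // x y _ _; apply: hab.
move=> /not_all_ex_not [u0 /not_all_ex_not [v0 z0]].
set z := br u0 v0.
pose Cset y := forall c d, br (br c d) y = 0.
have P2' : forall s, u0 \in s -> v0 \in s -> forall y, gen_subalgebra br s y ->
    ~ Fit br (gen_subalgebra br s) y -> br z y <> 0.
  move=> s us vs y By nF.
  have HSB := gen_sub br s; have [HFa [T [HB HT]]] := H s.
  apply: (act_inj HSB HFa HB HT By nF) => //.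
  by apply: (Fit_br HL HM HSB); apply: gen_in.
have inFit : forall s, u0 \in s -> v0 \in s -> forall y, gen_subalgebra br s y ->
    Cset y -> Fit br (gen_subalgebra br s) y.
  move=> s us vs y By Cy; apply: NNPP => nF; exact: (P2' s us vs y By nF (Cy u0 v0)).
have inC : forall s, u0 \in s -> v0 \in s -> forall y,
    Fit br (gen_subalgebra br s) y -> Cset y.
  move=> s us vs y Fy c d.
  have HSB := gen_sub br s; have [HFa _] := H s.
  pose s' := c :: d :: s.
  have ss' : {subset s <= s'} by move=> x xs; rewrite !inE xs !orbT.
  have Fy' : Fit br (gen_subalgebra br s') y.
    apply: NNPP => nF.
    apply: (P2' s' (ss' _ us) (ss' _ vs) y).
    - apply: (gen_mono ss'); exact: Fit_S HSB _ Fy.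
    - exact: nF.
    - apply: HFa => //; by apply: (Fit_br HL HM HSB); apply: gen_in.
  have [HFa' _] := H s'.
  apply: HFa' => //; apply: (Fit_br HL HM (gen_sub br s')); apply: gen_in;
    by rewrite !inE eqxx ?orbT.
have CI : ideal br (fun _ => True) Cset.
  split => //.
  - split; first by move=> c d; rewrite (br0r HL).
    + by move=> x y hx hy c d; rewrite (brDr HL) (hx c d) (hy c d) addr0.
    + by move=> c' x hx c d; rewrite (brZr HL) (hx c d) scaler0.
  - by move=> x y hx _; split => c d; apply: HM.
have Cab : forall x1 x2, Cset x1 -> Cset x2 -> br x1 x2 = 0.
  move=> x1 x2 C1 C2.
  pose s := [:: x1; x2; u0; v0].
  have [HFa _] := H s.
  by apply: HFa; apply: inFit => //; rewrite ?inE ?eqxx ?orbT //; apply: gen_in;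
    rewrite ?inE ?eqxx ?orbT.
have CsubFA : forall y, Cset y -> FA y.
  move=> y Cy; apply: (Fit_nil CI) => //.
  by apply: abel_nil.
have FAsubC : forall y, FA y -> Cset y.
  apply: (Fit_min CI) => I HI NI y Iy c d.
  pose s := [:: y; c; d; u0; v0].
  have HSB := gen_sub br s; have [HFa _] := H s.
  have HIm := ideal_meet HSB HI.
  have Fy : Fit br (gen_subalgebra br s) y.
    apply: (Fit_nil HIm); last by split => //; apply: gen_in; rewrite inE eqxx.
    case: NI => N HN; exists N => x hx; apply: HN.
    by apply: (lpow_mono _ hx) => x' [].
  apply: HFa => //; apply: (Fit_br HL HM HSB); apply: gen_in; by rewrite !inE eqxx ?orbT.
split.
  by move=> x y /FAsubC Cx /FAsubC Cy; apply: Cab.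
have [T [_ iT spT]] := exists_basis (fun _ => True) (Fit_subspace (subalgT br)).
exists T; split; first by split.
move=> n a ia hTa p p0 b Fb b0.
pose s := [seq a i | i <- enum 'I_n] ++ [:: b; u0; v0].
have us : u0 \in s by rewrite mem_cat !inE eqxx ?orbT.
have vs : v0 \in s by rewrite mem_cat !inE eqxx ?orbT.
have HSB := gen_sub br s; have [HFa [TB [HB HT]]] := H s.
have Ba i : gen_subalgebra br s (a i).
  by apply: gen_in; rewrite mem_cat; apply/orP; left; apply: map_f; rewrite mem_enum.
apply: (Gmain HL HM HSB HFa HB HT Ba) => //.
- move=> c hc; apply: (iT n a c ia hTa); apply: CsubFA; exact: inC us vs _ hc.
- apply: inFit => //; last exact: FAsubC.
  by apply: gen_in; rewrite mem_cat !inE eqxx ?orbT.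
Qed.

End Main.

Theorem theorem3p2p3 (k : fieldType) (A : lmodType k) (br : A -> A -> A) :
  is_lie_algebra br -> metabelian br ->
  (U_algebra br (fun _ => True) <->
   forall s : seq A, U_algebra br (gen_subalgebra br s)).
Proof.
move=> HL HM; split; [exact: dir1 | exact: dir2].
Qed.
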